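(* Let $A \in \mathbb{R}^{m \times r}$ and $B \in \mathbb{R}^{r \times n}$, and for $\kappa\in\mathbb{R}^r_+$ let $f_\kappa\colon\mathbb{R}^n_+\to\mathbb{R}^m$, $f_\kappa(x)=A_\kappa x^B$. The following are equivalent: (i) $f_\kappa$ is injective on $\mathbb{R}^n_+$ for all $\kappa\in\mathbb{R}^r_+$; (ii) $\ker(B)=\{0\}$ and $\sigma(\ker(A)) \cap \sigma(\mathrm{im}(B)) = \{0\}$.
   Context: $\mathbb{R}_+$ denotes the strictly positive reals. $(x^B)_j=\prod_i x_i^{b_{ji}}$ (real exponents), $A_\kappa=A\,\mathrm{diag}(\kappa)$. $\sigma$ denotes the componentwise sign vector in $\{-,0,+\}^k$, $\sigma(T)=\{\sigma(x)\mid x\in T\}$, and $0$ in (ii) denotes the zero sign vector. *)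

(* Defs.v *)
From Stdlib Require Import Reals.
Open Scope R_scope.

(* Vectors in R^k are functions nat -> R (only indices < k matter);
   a matrix in R^{p x q} is a function nat -> nat -> R, entry (row i, col j)
   being M i j for i < p, j < q. *)

Fixpoint sumR (k : nat) (f : nat -> R) : R :=
  match k with O => 0 | S k' => sumR k' f + f k' end.
Fixpoint prodR (k : nat) (f : nat -> R) : R :=
  match k with O => 1 | S k' => prodR k' f * f k' end.

Definition mulmv (q : nat) (M : nat -> nat -> R) (v : nat -> R) : nat -> R :=
  fun i => sumR q (fun j => M i j * v j).

Definition posvec (k : nat) (x : nat -> R) : Prop := forall i, (i < k)%nat -> 0 < x i.

Definition monB (n : nat) (B : nat -> nat -> R) (x : nat -> R) : nat -> R :=
  fun j => prodR n (fun i => Rpower (x i) (B j i)).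

Definition fk (r n : nat) (A B : nat -> nat -> R) (kappa x : nat -> R) : nat -> R :=
  mulmv r (fun i j => A i j * kappa j) (monB n B x).

Definition inj_pos (m r n : nat) (A B : nat -> nat -> R) (kappa : nat -> R) : Prop :=
  forall x y, posvec n x -> posvec n y ->
    (forall i, (i < m)%nat -> fk r n A B kappa x i = fk r n A B kappa y i) ->
    forall i, (i < n)%nat -> x i = y i.

Inductive sgn := Sneg | Szero | Spos.
Definition sign (a : R) : sgn :=
  match Rlt_dec a 0 with
  | left _ => Sneg
  | right _ => if Req_EM_T a 0 then Szero else Spos
  end.

Definition in_ker (m r : nat) (A : nat -> nat -> R) (u : nat -> R) : Prop :=
  forall i, (i < m)%nat -> mulmv r A u i = 0.

Definition in_im (r n : nat) (B : nat -> nat -> R) (w : nat -> R) : Prop :=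
  exists v, forall j, (j < r)%nat -> w j = mulmv n B v j.

Definition ker_trivial (r n : nat) (B : nat -> nat -> R) : Prop :=
  forall v, in_ker r n B v -> forall i, (i < n)%nat -> v i = 0.

Definition sign_cond (m r n : nat) (A B : nat -> nat -> R) : Prop :=
  forall u w, in_ker m r A u -> in_im r n B w ->
    (forall j, (j < r)%nat -> sign (u j) = sign (w j)) ->
    forall j, (j < r)%nat -> sign (u j) = Szero.

(* Main.v *)
Require Import Defs.
From Stdlib Require Import Reals Lra Lia.
Open Scope R_scope.

Lemma sumR_ext k f g : (forall j, (j < k)%nat -> f j = g j) -> sumR k f = sumR k g.
Proof.
  induction k; simpl; intros H; [reflexivity|].
  rewrite IHk by (intros; apply H; lia). rewrite H by lia. reflexivity.
Qed.

Lemma sumR_minus k f g : sumR k (fun j => f j - g j) = sumR k f - sumR k g.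
Proof. induction k; simpl; [ring|]. rewrite IHk; ring. Qed.

Lemma sumR_zero k : sumR k (fun _ => 0) = 0.
Proof. induction k; simpl; [ring|]. rewrite IHk; ring. Qed.

Lemma prodR_exp n g : prodR n (fun i => exp (g i)) = exp (sumR n g).
Proof. induction n; simpl. symmetry; apply exp_0. rewrite IHn, exp_plus; ring. Qed.

Lemma monB_exp n B x j : monB n B x j = exp (mulmv n B (fun i => ln (x i)) j).
Proof. unfold monB, mulmv, Rpower. apply prodR_exp. Qed.

Lemma sign_neg a : sign a = Sneg <-> a < 0.
Proof. unfold sign; destruct (Rlt_dec a 0); [tauto|].
  destruct (Req_EM_T a 0); split; intros; try discriminate; lra. Qed.
Lemma sign_zero a : sign a = Szero <-> a = 0.
Proof. unfold sign; destruct (Rlt_dec a 0). split; intros; [discriminate|lra].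
  destruct (Req_EM_T a 0); split; intros; try discriminate; auto; lra. Qed.
Lemma sign_pos a : sign a = Spos <-> 0 < a.
Proof. unfold sign; destruct (Rlt_dec a 0). split; intros; [discriminate|lra].
  destruct (Req_EM_T a 0); split; intros; try discriminate; auto; lra. Qed.

Lemma sign_eq a b : (a < 0 -> b < 0) -> (a = 0 -> b = 0) -> (0 < a -> 0 < b) -> sign a = sign b.
Proof.
  intros H1 H2 H3. destruct (Rtotal_order a 0) as [h|[h|h]].
  - rewrite (proj2 (sign_neg a) h), (proj2 (sign_neg b) (H1 h)); auto.
  - rewrite (proj2 (sign_zero a) h), (proj2 (sign_zero b) (H2 h)); auto.
  - rewrite (proj2 (sign_pos a) h), (proj2 (sign_pos b) (H3 h)); auto.
Qed.

Lemma sign_same_neg a b : sign a = sign b -> a < 0 -> b < 0.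
Proof. intros E h. apply sign_neg. rewrite <- E. apply sign_neg; auto. Qed.
Lemma sign_same_zero a b : sign a = sign b -> a = 0 -> b = 0.
Proof. intros E h. apply sign_zero. rewrite <- E. apply sign_zero; auto. Qed.
Lemma sign_same_pos a b : sign a = sign b -> 0 < a -> 0 < b.
Proof. intros E h. apply sign_pos. rewrite <- E. apply sign_pos; auto. Qed.

Lemma exp_sub_sign a b : ((a < b -> exp a - exp b < 0) /\ (a = b -> exp a - exp b = 0)
   /\ (b < a -> 0 < exp a - exp b)).
Proof.
  split; [|split]; intros h.
  - pose proof (exp_increasing _ _ h); lra.
  - subst; ring.
  - pose proof (exp_increasing _ _ h); lra.
Qed.

Lemma div_neg a b : a < 0 -> b < 0 -> 0 < a / b.
Proof. intros. replace (a / b) with ((- a) * / (- b)) by (field; lra).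
  apply Rmult_lt_0_compat; [lra|]. apply Rinv_0_lt_compat; lra. Qed.
Lemma div_pos a b : 0 < a -> 0 < b -> 0 < a / b.
Proof. intros. apply Rmult_lt_0_compat; [lra|]. apply Rinv_0_lt_compat; lra. Qed.

Theorem mainTheorem9 (m r n : nat) (A B : nat -> nat -> R) :
  (forall kappa : nat -> R, posvec r kappa -> inj_pos m r n A B kappa) <->
  (ker_trivial r n B /\ sign_cond m r n A B).
Proof.
  split.
  - intros Hinj. split.
    + intros v Hv i Hi.
      assert (Hpos: posvec r (fun _ => 1)) by (intros j _; lra).
      assert (E := Hinj _ Hpos (fun i => exp (v i)) (fun _ => exp 0)).
      assert (exp (v i) = exp 0).
      { apply E; [intros k _; apply exp_pos | intros k _; apply exp_pos | | exact Hi].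
        intros k _. unfold fk, mulmv. apply sumR_ext. intros j Hj.
        rewrite !monB_exp. f_equal. f_equal.
        unfold mulmv. rewrite (sumR_ext _ _ (fun i0 => B j i0 * v i0)).
        2:{ intros; rewrite ln_exp; auto. }
        rewrite (sumR_ext n (fun i0 => B j i0 * ln (exp 0)) (fun _ => 0)).
        2:{ intros; rewrite ln_exp; ring. }
        rewrite sumR_zero. apply Hv; auto. }
      apply exp_inv; auto.
    + intros u w Hu [v Hw] Hs j Hj.
      set (kappa := fun j => if Req_EM_T (w j) 0 then 1 else u j / (exp (w j) - exp 0)).
      assert (Hk : forall j, (j < r)%nat -> kappa j * (exp (w j) - exp 0) = u j).
      { intros j0 Hj0. unfold kappa. destruct (Req_EM_T (w j0) 0) as [e|ne].
        - rewrite e. replace (u j0) with 0 by (symmetry; apply (sign_same_zero (w j0)); auto; symmetry; auto). ring.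
        - field. intro h. apply ne. apply exp_inv. lra. }
      assert (Hpos : posvec r kappa).
      { intros j0 Hj0. unfold kappa. destruct (Req_EM_T (w j0) 0) as [e|ne]; [lra|].
        destruct (exp_sub_sign (w j0) 0) as [a [_ c]].
        destruct (Rtotal_order (w j0) 0) as [h|[h|h]]; [|contradiction|].
        - assert (u j0 < 0) by (apply (sign_same_neg (w j0)); auto; symmetry; auto).
          specialize (a h). apply div_neg; auto.
        - assert (0 < u j0) by (apply (sign_same_pos (w j0)); auto; symmetry; auto).
          specialize (c h). apply div_pos; auto. }
      assert (Hxy : forall i, (i < n)%nat -> exp (v i) = exp 0).
      { apply (Hinj _ Hpos); [intros k _; apply exp_pos | intros k _; apply exp_pos |].
        intros i Hi. apply Rminus_diag_uniq. unfold fk, mulmv. rewrite <- sumR_minus.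
        transitivity (mulmv r A u i); [|apply Hu; auto]. unfold mulmv. apply sumR_ext. intros j0 Hj0.
        rewrite <- (Hk j0 Hj0), !monB_exp. rewrite Hw by auto.
        unfold mulmv. rewrite (sumR_ext _ (fun i0 => B j0 i0 * ln (exp (v i0))) (fun i0 => B j0 i0 * v i0)).
        2:{ intros; rewrite ln_exp; auto. }
        rewrite (sumR_ext n (fun i0 => B j0 i0 * ln (exp 0)) (fun _ => 0)).
        2:{ intros; rewrite ln_exp; ring. }
        rewrite sumR_zero. ring. }
      assert (w j = 0).
      { rewrite Hw by auto. unfold mulmv. rewrite (sumR_ext n _ (fun _ => 0)).
        apply sumR_zero. intros i Hi. rewrite (exp_inv _ _ (Hxy i Hi)). ring. }
      rewrite Hs by auto. apply sign_zero; auto.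
  - intros [Hker Hsc] kappa Hk x y Hx Hy Heq.
    set (lx := fun i => ln (x i)). set (ly := fun i => ln (y i)).
    assert (Hu : in_ker m r A (fun j => kappa j * (exp (mulmv n B lx j) - exp (mulmv n B ly j)))).
    { intros i Hi. specialize (Heq i Hi). unfold fk, mulmv in Heq |- *.
      apply Rminus_diag_eq in Heq. rewrite <- sumR_minus in Heq. rewrite <- Heq.
      apply sumR_ext. intros j Hj. rewrite !monB_exp. fold lx ly. unfold mulmv. ring. }
    assert (Hw : in_im r n B (fun j => mulmv n B lx j - mulmv n B ly j)).
    { exists (fun i => lx i - ly i). intros j Hj. unfold mulmv. rewrite <- sumR_minus.
      apply sumR_ext. intros; ring. }
    assert (Hz := Hsc _ _ Hu Hw).
    assert (Hsall : forall j, (j < r)%nat -> sign (kappa j * (exp (mulmv n B lx j) - exp (mulmv n B ly j))) =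
                   sign (mulmv n B lx j - mulmv n B ly j)).
      { intros j Hj. specialize (Hk j Hj).
        destruct (exp_sub_sign (mulmv n B lx j) (mulmv n B ly j)) as [a [b c]].
        apply sign_eq; intros h.
        - destruct (Rtotal_order (mulmv n B lx j) (mulmv n B ly j)) as [h'|[h'|h']].
          + lra.
          + specialize (b h'). rewrite b in h. lra.
          + specialize (c h'). assert (0 < kappa j * (exp (mulmv n B lx j) - exp (mulmv n B ly j))) by (apply Rmult_lt_0_compat; auto). lra.
        - apply Rmult_integral in h. destruct h as [h|h]; [lra|].
          assert (exp (mulmv n B lx j) = exp (mulmv n B ly j)) by lra.
          apply exp_inv in H. lra.
        - destruct (Rtotal_order (mulmv n B lx j) (mulmv n B ly j)) as [h'|[h'|h']].
          + specialize (a h'). assert (kappa j * (exp (mulmv n B lx j) - exp (mulmv n B ly j)) < 0).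
            { rewrite <- (Rmult_0_r (kappa j)). apply Rmult_lt_compat_l; auto. }
            lra.
          + specialize (b h'). rewrite b in h. lra.
          + lra. }
    assert (Hw0 : forall j, (j < r)%nat -> mulmv n B lx j - mulmv n B ly j = 0).
    { intros j Hj. apply sign_zero. rewrite <- Hsall by auto. apply Hz; auto. }
    assert (Hv : in_ker r n B (fun i => lx i - ly i)).
    { intros j Hj. rewrite <- (Hw0 j Hj). unfold mulmv. rewrite <- sumR_minus.
      apply sumR_ext. intros; ring. }
    intros i Hi. apply ln_inv; auto. specialize (Hker _ Hv i Hi). simpl in Hker.
    unfold lx, ly in Hker. lra.
Qed.
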